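(* Let $K\subset\{1,\dots,2d\}$ be nonempty. For each $0\le n^0\le\sharp(K)$ and $0\le n^+\le\sharp(K)-n^0$, with $n^-=\sharp(K)-n^0-n^+$, the set $J^{(n^0,n^+,n^-)}_{\mathcal O_K^{\mathbb C}}$ is path connected.
   Context: Let $d\ge2$. $\mathcal B^{\mathbb C}$ is the quotient of the set of complex $2d\times4d$ matrices $(A\,|\,B)$ with $\operatorname{rank}(A\,|\,B)=2d$, $AB^*=BA^*$ (topology from $\mathbb C^{8d^2}$) by the left action $(A\,|\,B)\mapsto(TA\,|\,TB)$ of $GL(2d,\mathbb C)$, with quotient topology. For $K\subset\{1,\dots,2d\}$, $\mathcal O_K^{\mathbb C}$ is the set of classes $[A\,|\,B]$ having a representative with columns $a_i=-e_i$, $b_i=s_i$ for $i\in K$ and $a_i=s_i$, $b_i=e_i$ for $i\notin K$, where $S=(s_1,\dots,s_{2d})=(s_{lj})$ is a $2d\times2d$ Hermitian matrix (uniquely determined, denoted $S(\mathbf A)$) and $e_i$ are standard basis vectors; it carries the topology from $\mathcal B^{\mathbb C}$. For $K=\{n_1<\dots<n_{m_0}\}$, $S_K(\mathbf A)=(s_{n_in_j})_{i,j=1}^{m_0}$, and $J^{(n^0,n^+,n^-)}_{\mathcal O_K^{\mathbb C}}$ is the set of $\mathbf A\in\mathcal O_K^{\mathbb C}$ such that $S_K(\mathbf A)$ has exactly $n^0$ zero, $n^+$ positive and $n^-$ negative eigenvalues counted with multiplicity. *)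

(* Defs.v *)
From HB Require Import structures.
From mathcomp Require Import all_boot all_order all_algebra.
From mathcomp Require Import reals.
From mathcomp Require Import complex.
Set Implicit Arguments. Unset Strict Implicit. Unset Printing Implicit Defensive.
Import Order.TTheory GRing.Theory Num.Theory.
Local Open Scope ring_scope.

Section Defs.
Variable R : realType.
Local Notation C := (R[i]).
Variable d : nat.
Local Notation n := (2 * d)%N.

(* A point of the ambient space C^{8d^2}: a pair (A, B) of 2d x 2d matrices,
   standing for the 2d x 4d matrix (A | B). *)
Definition pt := ('M[C]_n * 'M[C]_n)%type.

Definition adjm (m : nat) (M : 'M[C]_m) : 'M[C]_m := (map_mx (@conjc R) M)^T.

Definition hermitian (S : 'M[C]_n) : Prop := adjm S = S.

Definition inM (x : pt) : Prop :=
  \rank (row_mx x.1 x.2) = n /\ x.1 *m adjm x.2 = x.2 *m adjm x.1.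

Definition equiv (x y : pt) : Prop :=
  exists T : 'M[C]_n, T \in unitmx /\ y.1 = T *m x.1 /\ y.2 = T *m x.2.

(* the normal-form representative attached to K and S *)
Definition AK (K : {set 'I_n}) (S : 'M[C]_n) : 'M[C]_n :=
  \matrix_(l, i) (if i \in K then - (l == i)%:R else S l i).
Definition BK (K : {set 'I_n}) (S : 'M[C]_n) : 'M[C]_n :=
  \matrix_(l, i) (if i \in K then S l i else (l == i)%:R).

(* [x] in O_K with S(x) = S *)
Definition OK_with (K : {set 'I_n}) (x : pt) (S : 'M[C]_n) : Prop :=
  hermitian S /\ equiv (AK K S, BK K S) x.

(* S_K : principal submatrix on the rows/columns in K, in increasing order *)
Definition subK (K : {set 'I_n}) (S : 'M[C]_n) : 'M[C]_#|K| :=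
  \matrix_(i, j) S (enum_val i) (enum_val j).

(* exactly n0 zero, np positive and nm negative eigenvalues counted with
   (algebraic) multiplicity: the roots of the characteristic polynomial *)
Definition inertia (m : nat) (M : 'M[C]_m) (n0 np nm : nat) : Prop :=
  exists rs : seq C,
    char_poly M = \prod_(r <- rs) ('X - r%:P) /\
    count (fun r => r == 0) rs = n0 /\
    count (fun r => 0 < r) rs = np /\
    count (fun r => r < 0) rs = nm.

(* J^{(n0,np,nm)}_{O_K}, on representatives *)
Definition inJ (K : {set 'I_n}) (n0 np nm : nat) (x : pt) : Prop :=
  inM x /\ exists S, OK_with K x S /\ inertia (subK K S) n0 np nm.

Definition near_pt (x y : pt) (eps : C) : Prop :=
  forall l j, `|y.1 l j - x.1 l j| < eps /\ `|y.2 l j - x.2 l j| < eps.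

(* V (a set of representatives) is the preimage of an open set of the
   quotient B^C: it is contained in M, saturated, and relatively open in M *)
Definition quot_open (V : pt -> Prop) : Prop :=
  (forall x, V x -> inM x) /\
  (forall x y, V x -> inM y -> equiv x y -> V y) /\
  (forall x, V x -> exists2 eps : C, 0 < eps &
     forall y, inM y -> near_pt x y eps -> V y).

(* g : [0,1] -> B^C (via representatives) is continuous for the quotient topology *)
Definition quot_path (g : R -> pt) : Prop :=
  (forall t, 0 <= t <= 1 -> inM (g t)) /\
  forall V, quot_open V ->
    forall t, 0 <= t <= 1 -> V (g t) ->
      exists2 del : R, 0 < del &
        forall s, 0 <= s <= 1 -> `|s - t| < del -> V (g s).

(* path connectedness of a class-invariant subset P of B^C, with the topology
   induced from B^C *)
Definition path_connected (P : pt -> Prop) : Prop :=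
  forall x y, P x -> P y ->
    exists g : R -> pt, quot_path g /\
      (forall t, 0 <= t <= 1 -> P (g t)) /\
      equiv x (g 0) /\ equiv y (g 1).

End Defs.

(* Main.v *)
Require Import Defs.
From HB Require Import structures.
From mathcomp Require Import all_boot all_order all_algebra.
From mathcomp Require Import reals complex.
From mathcomp Require Import all_fingroup.
From mathcomp Require Import sesquilinear spectral.
From mathcomp Require Import ring lra zify.
From Stdlib Require Import Lia.
Import Order.TTheory GRing.Theory Num.Theory.
Local Open Scope ring_scope.
Set Implicit Arguments. Unset Strict Implicit. Unset Printing Implicit Defensive.

Section Lip.
Variable R : realType.
Local Notation C := (R[i]).
Local Notation rc := (real_complex R).

Lemma rc_le (x y : R) : (rc x <= rc y) = (x <= y).
Proof. exact: lecR. Qed.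
Lemma rc_lt (x y : R) : (rc x < rc y) = (x < y).
Proof. exact: ltcR. Qed.

Lemma normE (z : C) : `|z| = rc (complex.Re `|z|).
Proof. by rewrite RRe_real // normr_real. Qed.

Lemma norm_rc (x : R) : `|rc x| = rc `|x|.
Proof.
rewrite normc_def /=; congr (_ %:C)%C.
by rewrite expr0n /= addr0 sqrtr_sqr.
Qed.

Definition lip (f : R -> C) := exists2 L : R, 0 <= L &
  forall s t, 0 <= s -> s <= t -> t <= 1 -> `|f t - f s| <= rc (L * (t - s)).

Lemma lip_cst (c : C) : lip (fun _ => c).
Proof.
exists 0 => // s t _ _ _; rewrite subrr normr0 mul0r.
by rewrite rmorph0.
Qed.

Lemma lip_id : lip (fun t => rc t).
Proof.
exists 1 => // s t _ st _; rewrite -rmorphB norm_rc mul1r ger0_norm //.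
by rewrite subr_ge0.
Qed.

Lemma lip_add f g : lip f -> lip g -> lip (fun t => f t + g t).
Proof.
move=> [L1 L10 h1] [L2 L20 h2]; exists (L1 + L2); first by rewrite addr_ge0.
move=> s t s0 st t1.
have -> : f t + g t - (f s + g s) = (f t - f s) + (g t - g s) by ring.
apply: (le_trans (ler_normD _ _)).
by rewrite mulrDl rmorphD lerD // ?h1 ?h2.
Qed.

Lemma lip_opp f : lip f -> lip (fun t => - f t).
Proof.
move=> [L L0 h]; exists L => // s t s0 st t1.
by rewrite -opprD normrN h.
Qed.

Lemma lip_conj f : lip f -> lip (fun t => (f t)^*%C).
Proof.
move=> [L L0 h]; exists L => // s t s0 st t1.
by rewrite -rmorphB normcJ h.
Qed.

Lemma lip_bound f : lip f -> exists2 M : R, 0 <= M &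
  forall s, 0 <= s -> s <= 1 -> `|f s| <= rc M.
Proof.
move=> [L L0 h]; exists (complex.Re `|f 0| + L).
  rewrite addr_ge0 // -(rc_le 0) -normE.
  by rewrite (rmorph0 (real_complex R)).
move=> s s0 s1.
have -> : f s = f 0 + (f s - f 0) by ring.
apply: (le_trans (ler_normD _ _)); rewrite rmorphD {1}normE lerD //.
apply: (le_trans (h 0 s _ _ _)) => //; rewrite rc_le subr0.
by rewrite -[X in _ <= X]mulr1 ler_wpM2l.
Qed.

Lemma lip_mul f g : lip f -> lip g -> lip (fun t => f t * g t).
Proof.
move=> hf hg; have [Mf Mf0 bf] := lip_bound hf; have [Mg Mg0 bg] := lip_bound hg.
move: hf hg => [L1 L10 h1] [L2 L20 h2].
exists (Mf * L2 + L1 * Mg); first by rewrite addr_ge0 // mulr_ge0.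
move=> s t s0 st t1.
have -> : f t * g t - f s * g s = f t * (g t - g s) + (f t - f s) * g s by ring.
apply: (le_trans (ler_normD _ _)); rewrite !normrM.
have t0 : 0 <= t by apply: le_trans st.
have s1 : s <= 1 by apply: le_trans t1.
rewrite mulrDl rmorphD lerD //.
  rewrite -mulrA rmorphM ler_pM //; first by rewrite ?bf.
  by rewrite h2.
rewrite mulrAC rmorphM ler_pM //; first by rewrite ?h1.
by rewrite bg.
Qed.

Lemma lip_ext f g : (forall t, f t = g t) -> lip f -> lip g.
Proof. by move=> e [L L0 h]; exists L => // s t *; rewrite -!e h. Qed.

Lemma lip_sum (I : Type) (r : seq I) (F : I -> R -> C) :
  (forall i, lip (F i)) -> lip (fun t => \sum_(i <- r) F i t).
Proof.
move=> hF; elim: r => [|i r IH].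
  by apply: (lip_ext _ (lip_cst 0)) => t; rewrite big_nil.
by apply: (lip_ext _ (lip_add (hF i) IH)) => t; rewrite big_cons.
Qed.

Lemma lip_concat f g : lip f -> lip g -> f 1 = g 0 ->
  lip (fun t => if t <= 2^-1 then f (2 * t) else g (2 * t - 1)).
Proof.
move=> [L1 L10 h1] [L2 L20 h2] fg.
exists (2 * (L1 + L2)); first by rewrite mulr_ge0 // addr_ge0.
move=> s t s0 st t1.
case: (lerP s 2^-1) => hs; case: (lerP t 2^-1) => ht.
- have h : `|f (2 * t) - f (2 * s)| <= rc (L1 * (2 * t - 2 * s)).
    by apply: h1; lra.
  apply: (le_trans h); rewrite rc_le; nra.
- have -> : g (2 * t - 1) - f (2 * s) = (g (2 * t - 1) - g 0) + (f 1 - f (2 * s)).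
    by rewrite fg; ring.
  apply: (le_trans (ler_normD _ _)).
  have ha : `|g (2 * t - 1) - g 0| <= rc (L2 * (2 * t - 1 - 0)) by apply: h2; lra.
  have hb : `|f 1 - f (2 * s)| <= rc (L1 * (1 - 2 * s)) by apply: h1; lra.
  apply: le_trans (lerD ha hb) _.
  rewrite -rmorphD rc_le; nra.
- exfalso; lra.
- have h : `|g (2 * t - 1) - g (2 * s - 1)| <= rc (L2 * (2 * t - 1 - (2 * s - 1))).
    by apply: h2; lra.
  apply: (le_trans h); rewrite rc_le; nra.
Qed.

Lemma lip_rev f : lip f -> lip (fun t => f (1 - t)).
Proof.
move=> [L L0 h]; exists L => // s t s0 st t1.
rewrite distrC.
have h' : `|f (1 - s) - f (1 - t)| <= rc (L * ((1 - s) - (1 - t))) by apply: h; lra.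
apply: (le_trans h'); rewrite rc_le; nra.
Qed.

Lemma lip_comp_lin f (a b : R) : lip f -> 0 <= a -> 0 <= b -> a + b <= 1 ->
  lip (fun t => f (a + b * t)).
Proof.
move=> [L L0 h] a0 b0 ab; exists (L * b); first by rewrite mulr_ge0.
move=> s t s0 st t1.
have h' : `|f (a + b * t) - f (a + b * s)| <= rc (L * ((a + b * t) - (a + b * s))).
  by apply: h; nra.
apply: (le_trans h'); rewrite rc_le; nra.
Qed.


Definition lipm m p (M : R -> 'M[C]_(m, p)) := forall i j, lip (fun t => M t i j).

Lemma lipm_cst m p (A : 'M[C]_(m, p)) : lipm (fun _ => A).
Proof. by move=> i j; exact: lip_cst. Qed.

Lemma lipm_add m p (A B : R -> 'M[C]_(m, p)) : lipm A -> lipm B ->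
  lipm (fun t => A t + B t).
Proof.
move=> hA hB i j; apply: (lip_ext _ (lip_add (hA i j) (hB i j))) => t.
by rewrite mxE.
Qed.

Lemma lipm_mul m p q (A : R -> 'M[C]_(m, p)) (B : R -> 'M[C]_(p, q)) :
  lipm A -> lipm B -> lipm (fun t => A t *m B t).
Proof.
move=> hA hB i j.
apply: (lip_ext (f := fun t => \sum_(k <- index_enum 'I_p) A t i k * B t k j)).
  by move=> t; rewrite mxE.
by apply: lip_sum => k; apply: lip_mul.
Qed.

Lemma lipm_adj m (A : R -> 'M[C]_m) : lipm A ->
  lipm (fun t => (map_mx (@conjc R) (A t))^T).
Proof.
move=> hA i j; apply: (lip_ext _ (lip_conj (hA j i))) => t.
by rewrite !mxE.
Qed.

Lemma lipm_diag m (v : R -> 'rV[C]_m) : (forall i, lip (fun t => v t 0 i)) ->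
  lipm (fun t => diag_mx (v t)).
Proof.
move=> hv i j; case: (eqVneq i j) => [->|ij].
  by apply: (lip_ext _ (hv j)) => t; rewrite !mxE eqxx mulr1n.
by apply: (lip_ext _ (lip_cst 0)) => t; rewrite !mxE (negPf ij) mulr0n.
Qed.

Lemma lipm_unif m p (M : R -> 'M[C]_(m, p)) : lipm M ->
  exists2 L : R, 0 <= L & forall i j s t, 0 <= s -> s <= t -> t <= 1 ->
    `|M t i j - M s i j| <= rc (L * (t - s)).
Proof.
move=> hM.
pose P (ij : 'I_m * 'I_p) (L : R) := 0 <= L /\
    forall s t, 0 <= s -> s <= t -> t <= 1 ->
    `|M t ij.1 ij.2 - M s ij.1 ij.2| <= rc (L * (t - s)).
have [Lf hLf] : exists Lf : 'I_m * 'I_p -> R, forall ij, P ij (Lf ij).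
  apply: (@fin_all_exists _ (fun _ => R) P) => -[i j].
  by have [L L0 h] := hM i j; exists L; split.
exists (\sum_ij Lf ij); first by apply: sumr_ge0 => ij _; case: (hLf ij).
move=> i j s t s0 st t1; have [_ h] := hLf (i, j).
apply: (le_trans (h s t s0 st t1)); rewrite rc_le ler_wpM2r ?subr_ge0 //.
rewrite (bigD1 (i, j)) //= lerDl; apply: sumr_ge0 => ij _; by case: (hLf ij).
Qed.

End Lip.

Section Quot.
Variable R : realType.
Variable d : nat.
Local Notation C := (R[i]).
Local Notation rc := (real_complex R).
Local Notation n := (2 * d)%N.

Lemma near_lip m (M : R -> 'M[C]_m) : lipm M -> forall t (e : R), 0 < e ->
  0 <= t <= 1 -> exists2 del : R, 0 < del & forall s, 0 <= s <= 1 ->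
  `|s - t| < del -> forall i j, `|M s i j - M t i j| < rc e.
Proof.
move=> hM t e e0 /andP[t0 t1]; have [L L0 h] := lipm_unif hM.
exists (e / (L + 1)); first by rewrite divr_gt0 // ltr_wpDl.
move=> s /andP[s0 s1] hst i j.
have hlt : `|s - t| * (L + 1) < e by rewrite -ltr_pdivlMr // ltr_wpDl.
case: (lerP s t) => hs.
  rewrite distrC; apply: (le_lt_trans (h i j s t s0 hs t1)); rewrite rc_lt.
  move: hlt; rewrite distrC ger0_norm ?subr_ge0 // => hlt; nra.
apply: (le_lt_trans (h i j t s t0 (ltW hs) s1)); rewrite rc_lt.
move: hlt; rewrite ger0_norm ?subr_ge0 ?(ltW hs) // => hlt; nra.
Qed.

Lemma quot_path_lip (g : R -> pt R d) : (forall t, 0 <= t <= 1 -> inM (g t)) ->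
  lipm (fun t => (g t).1) -> lipm (fun t => (g t).2) -> quot_path g.
Proof.
move=> hM h1 h2; split => // V [_ [_ Vo]] t t01 Vgt.
have [eps eps0 HV] := Vo _ Vgt.
have [e e0 eE] : exists2 e : R, 0 < e & eps = rc e.
  exists (complex.Re eps); last by rewrite RRe_real // gtr0_real.
  by rewrite -rc_lt (rmorph0 (real_complex R)) RRe_real // gtr0_real.
have [del1 del10 hd1] := near_lip h1 e0 t01.
have [del2 del20 hd2] := near_lip h2 e0 t01.
exists (Order.min del1 del2); first by rewrite lt_min del10 del20.
move=> s s01 hst; apply: HV; first exact: hM.
rewrite lt_min in hst; case/andP: hst => hs1 hs2.
by move=> l j; rewrite eE; split; [apply: hd1 | apply: hd2].
Qed.

Lemma equiv_refl (x : pt R d) : Defs.equiv x x.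
Proof. by exists 1%:M; rewrite unitmx1 !mul1mx. Qed.

Lemma equiv_sym (x y : pt R d) : Defs.equiv x y -> Defs.equiv y x.
Proof.
move=> [T [hT [e1 e2]]]; exists (invmx T); rewrite unitmx_inv hT.
by rewrite e1 e2 !mulKmx.
Qed.

End Quot.

Section NF.
Variable R : realType.
Variable d : nat.
Local Notation C := (R[i]).
Local Notation n := (2 * d)%N.
Variable K : {set 'I_n}.

Definition DK : 'M[C]_n := diag_mx (\row_i (i \in K)%:R).

Lemma AK_E (S : 'M[C]_n) : AK K S = S *m (1%:M - DK) - DK.
Proof.
rewrite mulmxBr mulmx1 mul_mx_diag; apply/matrixP => l i; rewrite !mxE.
case: (boolP (i \in K)) => iK; rewrite ?iK ?(negPf iK);
  case: (eqVneq l i) => [->|li] /=; rewrite ?mulr1n ?mulr0n ?iK ?(negPf iK) /=; ring.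
Qed.

Lemma BK_E (S : 'M[C]_n) : BK K S = S *m DK + (1%:M - DK).
Proof.
rewrite mul_mx_diag; apply/matrixP => l i; rewrite !mxE.
case: (boolP (i \in K)) => iK; rewrite ?iK ?(negPf iK);
  case: (eqVneq l i) => [->|li] /=; rewrite ?mulr1n ?mulr0n ?iK ?(negPf iK) /=; ring.
Qed.

Lemma adjmM m (X Y : 'M[C]_m) : adjm (X *m Y) = adjm Y *m adjm X.
Proof. by rewrite /adjm map_mxM trmx_mul. Qed.
Lemma adjmD m (X Y : 'M[C]_m) : adjm (X + Y) = adjm X + adjm Y.
Proof. by rewrite /adjm map_mxD linearD. Qed.
Lemma adjmN m (X : 'M[C]_m) : adjm (- X) = - adjm X.
Proof. by rewrite /adjm map_mxN linearN. Qed.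
Lemma adjm1 m : adjm (1%:M : 'M[C]_m) = 1%:M.
Proof. by rewrite /adjm map_mx1 trmx1. Qed.
Lemma adjmDK : adjm DK = DK.
Proof.
apply/matrixP => i j; rewrite !mxE; case: (eqVneq j i) => [->|ji].
  by rewrite -!mulrnA conjc_nat.
by rewrite -!mulrnA conjc_nat !muln0.
Qed.

Lemma DKK : DK *m DK = DK.
Proof.
by rewrite mulmx_diag; congr diag_mx; apply/rowP => i; rewrite !mxE;
  case: (i \in K); rewrite ?mulr1 ?mulr0.
Qed.

Lemma inM_NF (S : 'M[C]_n) : Defs.hermitian S -> inM (AK K S, BK K S).
Proof.
move=> hS; split => /=.
  apply/eqP; rewrite eqn_leq rank_leq_row /=.
  pose P1 : 'M[C]_n := diag_mx (\row_i (- (i \in K)%:R)).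
  pose P2 : 'M[C]_n := diag_mx (\row_i ((i \notin K)%:R)).
  apply: leq_trans (mxrankM_maxl _ (col_mx P1 P2)).
  have -> : row_mx (AK K S) (BK K S) *m col_mx P1 P2 = 1%:M.
    rewrite mul_row_col !mul_mx_diag; apply/matrixP => l i; rewrite !mxE.
    case: (boolP (i \in K)) => iK; rewrite ?iK ?(negPf iK);
      case: (eqVneq l i) => [->|li] /=; rewrite ?mulr1n ?mulr0n ?iK ?(negPf iK) /=; ring.
  by rewrite mxrank1.
rewrite AK_E BK_E !(adjmD, adjmN, adjmM) adjm1 adjmDK hS.
rewrite !(mulmxDl, mulmxDr, mulmxBl, mulmxBr, mulmx1, mul1mx, mulmxN, mulNmx).
rewrite !mulmxA.
have e1 : S *m DK *m DK = S *m DK by rewrite -mulmxA DKK.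
rewrite !e1 !DKK.
apply/matrixP => i j; rewrite !mxE; ring.
Qed.

End NF.

Section Gam.
Variable R : realType.
Local Notation C := (R[i]).
Local Notation rc := (real_complex R).

Lemma conjci : @conjc R 'i = - 'i.
Proof. exact: conjCi. Qed.

Lemma cjD (x y : C) : conjc (x + y) = conjc x + conjc y. Proof. exact: rmorphD. Qed.
Lemma cjB (x y : C) : conjc (x - y) = conjc x - conjc y. Proof. exact: rmorphB. Qed.
Lemma cjN (x : C) : conjc (- x) = - conjc x. Proof. exact: rmorphN. Qed.
Lemma cjM (x y : C) : conjc (x * y) = conjc x * conjc y. Proof. exact: rmorphM. Qed.
Lemma cjX (x : C) m : conjc (x ^+ m) = conjc x ^+ m. Proof. exact: rmorphXn. Qed.
Lemma cj1 : conjc (1 : C) = 1. Proof. exact: rmorph1. Qed.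
Lemma cj0 : conjc (0 : C) = 0. Proof. exact: rmorph0. Qed.

Lemma ii : ('i : C) * 'i = -1.
Proof. by rewrite -expr2 sqrCi. Qed.

Definition cz (y : R) : C := 1 - 'i * rc y.
Definition cc (y : R) : C := (1 + 'i * rc y) / cz y.

Lemma cz_conj y : conjc (cz y) = 1 + 'i * rc y.
Proof. by rewrite /cz cjB cj1 cjM conjci conjc_real mulNr opprK. Qed.

Lemma conj_num y : conjc (1 + 'i * rc y) = cz y.
Proof. by rewrite -cz_conj conjcK. Qed.

Lemma cz_mulconj y : cz y * conjc (cz y) = rc (1 + y ^+ 2).
Proof.
rewrite cz_conj /cz.
have -> : (1 - 'i * rc y) * (1 + 'i * rc y) = 1 - ('i * 'i) * (rc y * rc y) by ring.
by rewrite ii rmorphD rmorph1 expr2 rmorphM; ring.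
Qed.

Lemma cz_ge1 y : 1 <= `|cz y|.
Proof.
have h := sqr_normc (cz y); rewrite cz_mulconj normE in h.
move: h; set r := complex.Re _ => h.
have r0 : 0 <= r by rewrite -(rc_le 0) (rmorph0 (real_complex R)) -normE.
rewrite -rmorphXn in h; move/complexI: h => h.
rewrite normE -/r -(rmorph1 (real_complex R)) rc_le; nra.
Qed.

Lemma cz_neq0 y : cz y != 0.
Proof.
apply/negP => /eqP h; have := cz_ge1 y; rewrite h normr0.
by rewrite ler10.
Qed.

Lemma num_neq0 y : 1 + 'i * rc y != 0.
Proof. by rewrite -cz_conj conjc_eq0 cz_neq0. Qed.

Lemma cc_unit y : cc y * conjc (cc y) = 1.
Proof.
rewrite /cc cjM conjc_inv conj_num cz_conj.
have h1 := cz_neq0 y; have h2 := num_neq0 y.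
by rewrite mulrA divfK // divff.
Qed.

Definition gam (b t : R) : C := cc (b * t) ^+ 2.

Lemma gam0 b : gam b 0 = 1.
Proof.
by rewrite /gam /cc /cz mulr0 (rmorph0 (real_complex R)) mulr0 addr0 subr0 divr1 expr1n.
Qed.

Lemma gam_unit b t : gam b t * conjc (gam b t) = 1.
Proof. by rewrite /gam cjX -exprMn cc_unit expr1n. Qed.

Lemma lip_inv (f : R -> C) : lip f -> (forall t, 1 <= `|f t|) -> lip (fun t => (f t)^-1).
Proof.
move=> [L L0 h] h1; exists L => // s t s0 st t1.
have nz u : f u != 0 by apply/negP => /eqP e; have := h1 u; rewrite e normr0 ler10.
have ht := nz t; have hs := nz s.
have -> : (f t)^-1 - (f s)^-1 = (f s - f t) / (f t * f s).
  rewrite mulrBl invfM mulrCA divff // mulr1 mulrA divff // mul1r //.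
rewrite normrM distrC; apply: le_trans (h s t s0 st t1).
rewrite -[X in _ <= X]mulr1 ler_wpM2l // normfV normrM invf_le1.
  by rewrite -[1]mulr1 ler_pM.
by rewrite mulr_gt0 // normr_gt0.
Qed.

Lemma lip_gam b : lip (gam b).
Proof.
have hn : lip (fun t => 1 + 'i * rc (b * t)).
  apply: (lip_ext (f := fun t => 1 + 'i * (rc b * rc t))).
    by move=> t; rewrite rmorphM.
  apply: lip_add; first exact: lip_cst.
  apply: lip_mul; first exact: lip_cst.
  apply: lip_mul; [exact: lip_cst | exact: lip_id].
have hd : lip (fun t => cz (b * t)).
  apply: (lip_ext (f := fun t => 1 + - ('i * (rc b * rc t)))).
    by move=> t; rewrite /cz rmorphM.
  apply: lip_add; first exact: lip_cst.
  apply: lip_opp; apply: lip_mul; first exact: lip_cst.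
  apply: lip_mul; [exact: lip_cst | exact: lip_id].
have hc : lip (fun t => cc (b * t)).
  by apply: lip_mul => //; apply: lip_inv => // t; apply: cz_ge1.
by apply: (lip_ext (f := fun t => cc (b * t) * cc (b * t))) => [t|]; [rewrite /gam expr2 | apply: lip_mul].
Qed.

Lemma cc_surj (v : C) : v * conjc v = 1 -> v != -1 -> exists b, cc b = v.
Proof.
move=> hv hv1.
set x := complex.Re v; set y := complex.Im v.
have vE : v = rc x + 'i * rc y by rewrite -complexiE; apply: complexE.
have hxy : x ^+ 2 + y ^+ 2 = 1.
  apply: complexI; rewrite add_Re2_Im2 sqr_normc hv.
  by rewrite (rmorph1 (real_complex R)).
have hx : 1 + x != 0.
  apply/negP => /eqP hx.
  have x1 : x = -1 by lra.
  have y0 : y = 0 by move: hxy; rewrite x1 => hxy; nra.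
  by move: hv1; rewrite vE x1 y0 (rmorph0 (real_complex R)) mulr0 addr0 rmorphN rmorph1 eqxx.
exists (y / (1 + x)); set b := y / (1 + x).
have e1 : x + y * b = 1.
  have -> : x + y * b = (x * (1 + x) + y ^+ 2) / (1 + x) by rewrite /b; field.
  have -> : x * (1 + x) + y ^+ 2 = 1 + x by lra.
  by rewrite divff.
have e2 : y - x * b = b.
  have -> : y - x * b = (y * (1 + x) - x * y) / (1 + x) by rewrite /b; field.
  by rewrite /b; congr (_ / _); ring.
apply: (mulIf (cz_neq0 b)); rewrite /cc divfK ?cz_neq0 // vE /cz.
have -> : (rc x + 'i * rc y) * (1 - 'i * rc b) =
   (rc x + rc y * rc b) + 'i * (rc y - rc x * rc b) - ('i * 'i + 1) * (rc y * rc b).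
  by ring.
rewrite ii addNr mul0r subr0 -!rmorphM -rmorphD -rmorphB e1 e2.
by rewrite (rmorph1 (real_complex R)).
Qed.

Lemma gam_surj (w : C) : w * conjc w = 1 -> exists b, gam b 1 = w.
Proof.
move=> hw.
have [v [hv2 hv1]] : exists v : C, v ^+ 2 = w /\ v != -1.
  have [h|h] := eqVneq (sqrtC w) (-1).
    exists 1; split; first by rewrite -(sqrtCK w) h expr1n sqrrN expr1n.
    by apply/negP => /eqP h1; have := ltr01 (R := C); rewrite h1 oppr_gt0 ltr10.
  by exists (sqrtC w); rewrite sqrtCK.
have hvv : v * conjc v = 1.
  have h : (v * conjc v) ^+ 2 = 1 by rewrite exprMn -cjX hv2.
  move: h => /eqP; rewrite sqrf_eq1 => /orP[/eqP //|/eqP h].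
  by have := mulcJ_ge0 v; rewrite h ler0N1.
have [b hb] := cc_surj hvv hv1.
by exists b; rewrite /gam mulr1 hb.
Qed.

End Gam.

Section UPath.
Variable R : realType.
Local Notation C := (R[i]).
Local Notation rc := (real_complex R).
Variable k : nat.

Lemma tsE (M : 'M[C]_k) : (M ^t* )%sesqui = adjm M.
Proof. by rewrite /adjm map_trmx. Qed.

Lemma adjmK (M : 'M[C]_k) : adjm (adjm M) = M.
Proof. by apply/matrixP => i j; rewrite !mxE conjcK. Qed.

Lemma unit_sym (M : 'M[C]_k) : adjm M *m M = 1%:M -> M *m adjm M = 1%:M.
Proof. exact: mulmx1C. Qed.

Lemma adjm_diag (v : 'rV[C]_k) :
  adjm (diag_mx v) = diag_mx (\row_i conjc (v 0 i)).
Proof.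
apply/matrixP => i j; rewrite !mxE; case: (eqVneq j i) => [->|ji].
  by rewrite !mulr1n.
by rewrite !mulr0n cj0.
Qed.

Lemma unitary_path (U0 U1 : 'M[C]_k) :
  adjm U0 *m U0 = 1%:M -> adjm U1 *m U1 = 1%:M ->
  exists U : R -> 'M[C]_k, [/\ U 0 = U0, U 1 = U1, lipm U &
    forall t, adjm (U t) *m U t = 1%:M].
Proof.
move=> h0 h1; have h0' := unit_sym h0; have h1' := unit_sym h1.
pose W := U1 *m adjm U0.
have hW : adjm W *m W = 1%:M.
  by rewrite /W adjmM adjmK -mulmxA (mulmxA (adjm U1)) h1 mul1mx h0'.
have hW' := unit_sym hW.
have Wn : W \is normalmx by apply/normalmxP; rewrite tsE hW hW'.
have /orthomx_spectralP := Wn.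
set V := spectralmx W; set w := spectral_diag W => WE.
have hV' : V *m adjm V = 1%:M by rewrite -tsE; apply/unitarymxP; exact: spectral_unitarymx.
have hV : adjm V *m V = 1%:M by apply: mulmx1C.
rewrite invmx_unitary ?spectral_unitarymx // tsE in WE.
have hw i : w 0 i * conjc (w 0 i) = 1.
  have e : diag_mx w = V *m (adjm V *m diag_mx w *m V) *m adjm V.
    by rewrite !mulmxA hV' mul1mx -mulmxA hV' mulmx1.
  have e2 : diag_mx w *m adjm (diag_mx w) = 1%:M.
    rewrite e -WE !adjmM adjmK !mulmxA -(mulmxA _ (adjm V)) hV mulmx1.
    by rewrite adjmK -(mulmxA _ (adjm U0) U0) h0 mulmx1 -(mulmxA _ U1 (adjm U1)) h1' mulmx1 hV'.
  move/matrixP: e2 => /(_ i i); rewrite adjm_diag mulmx_diag !mxE eqxx !mulr1n.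
  done.
pose P (i : 'I_k) (b : R) := gam b 1 = w 0 i.
have [b hb] : exists b : 'I_k -> R, forall i, P i (b i).
  apply: (@fin_all_exists _ (fun _ => R) P) => i.
  exact: gam_surj (hw i).
pose G t := diag_mx (\row_i gam (b i) t).
exists (fun t => adjm V *m G t *m V *m U0); split.
- have -> : G 0 = 1%:M.
    by rewrite /G -diag_const_mx; congr diag_mx; apply/rowP => i; rewrite !mxE gam0.
  by rewrite mulmx1 hV mul1mx.
- have -> : G 1 = diag_mx w.
    by rewrite /G; congr diag_mx; apply/rowP => i; rewrite !mxE hb.
  by rewrite -WE /W -mulmxA h0 mulmx1.
- apply: lipm_mul; last exact: lipm_cst.
  apply: lipm_mul; last exact: lipm_cst.
  apply: lipm_mul; first exact: lipm_cst.
  apply: lipm_diag => i; apply: (lip_ext (f := gam (b i))); first by move=> t; rewrite mxE.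
  exact: lip_gam.
- move=> t.
  have hG : adjm (G t) *m G t = 1%:M.
    rewrite /G adjm_diag mulmx_diag -diag_const_mx; congr diag_mx.
    by apply/rowP => i; rewrite !mxE mulrC gam_unit.
  rewrite !adjmM adjmK !mulmxA -(mulmxA _ V (adjm V)) hV' mulmx1.
  rewrite -(mulmxA _ (adjm (G t)) (G t)) hG mulmx1.
  by rewrite -(mulmxA _ (adjm V) V) hV mulmx1 h0.
Qed.

End UPath.

Section Good.
Variable R : realType.
Local Notation C := (R[i]).
Local Notation rc := (real_complex R).
Variable k : nat.
Variables n0 np nm : nat.

Definition vseq (v : 'rV[C]_k) : seq C := [seq v 0 i | i <- enum 'I_k].

Definition goodv (v : 'rV[C]_k) := (forall i, conjc (v 0 i) = v 0 i) /\
  [/\ count (fun r => r == 0) (vseq v) = n0,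
      count (fun r => 0 < r) (vseq v) = np &
      count (fun r => r < 0) (vseq v) = nm].

Definition Good (M : 'M[C]_k) := exists U v, [/\ adjm U *m U = 1%:M, goodv v &
  M = adjm U *m diag_mx v *m U].

Lemma good_herm M : Good M -> adjm M = M.
Proof.
move=> [U [v [hU [hv _] ->]]].
rewrite !adjmM adjmK adjm_diag mulmxA; congr (_ *m _ *m _).
by congr diag_mx; apply/rowP => i; rewrite !mxE hv.
Qed.

Lemma char_poly_sim (P Q A : 'M[C]_k) : Q *m P = 1%:M ->
  char_poly (Q *m A *m P) = char_poly A.
Proof.
move=> hQP; have hPQ := mulmx1C hQP.
rewrite /char_poly.
have -> : char_poly_mx (Q *m A *m P) =
    map_mx polyC Q *m char_poly_mx A *m map_mx polyC P.
  rewrite /char_poly_mx mulmxBr mulmxBl -!map_mxM.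
  congr (_ - _); rewrite scalar_mxC -mulmxA -map_mxM hQP.
  by rewrite map_mx1 mulmx1.
rewrite !det_mulmx mulrC mulrA -det_mulmx -map_mxM hPQ map_mx1 det1.
by rewrite mul1r.
Qed.

Lemma char_poly_diag (v : 'rV[C]_k) :
  char_poly (diag_mx v) = \prod_(r <- vseq v) ('X - r%:P).
Proof.
rewrite char_poly_trig ?diag_mx_is_trig // /vseq big_map big_enum /=.
by apply: eq_bigr => i _; rewrite mxE eqxx mulr1n.
Qed.

Lemma good_inertia M : Good M -> inertia M n0 np nm.
Proof.
move=> [U [v [hU [hv [c0 cp cm]] ->]]].
exists (vseq v); split => //.
by rewrite char_poly_sim // char_poly_diag.
Qed.

Lemma herm_good (H : 'M[C]_k) : adjm H = H -> inertia H n0 np nm -> Good H.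
Proof.
move=> hH [rs [hc [c0 [cp cm]]]].
have Hh : H \is hermsymmx.
  by apply/is_hermitianmxP; rewrite expr0 scale1r tsE hH.
have /orthomx_spectralP HE := hermitian_normalmx Hh.
have hr := hermitian_spectral_diag_real Hh.
set P := spectralmx H in HE; set a := spectral_diag H in HE hr.
have hP' : P *m adjm P = 1%:M by rewrite -tsE; apply/unitarymxP; exact: spectral_unitarymx.
have hP : adjm P *m P = 1%:M by apply: mulmx1C.
rewrite invmx_unitary ?spectral_unitarymx // tsE in HE.
exists P, a; split => //; split.
  by move=> i; apply/CrealP; move/mxOverP: hr; apply.
have hperm : perm_eq rs (vseq a).
  by apply: prod_XsubC_eq; rewrite -hc -char_poly_diag HE char_poly_sim.
by rewrite -!(seq.permP hperm).
Qed.

End Good.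

Section Stage.
Variable R : realType.
Local Notation C := (R[i]).
Local Notation rc := (real_complex R).
Variable k : nat.
Variables n0 np nm : nat.
Local Notation Good := (Good n0 np nm).
Local Notation goodv := (goodv n0 np nm).

Lemma rc0 : rc 0 = 0. Proof. exact: rmorph0. Qed.
Lemma rc_eq0 (x : R) : (rc x == 0) = (x == 0).
Proof. by rewrite -rc0 (inj_eq (@complexI R)). Qed.
Lemma rc_gt0 (x : R) : (0 < rc x) = (0 < x).
Proof. by rewrite -rc0 rc_lt. Qed.
Lemma rc_lt0 (x : R) : (rc x < 0) = (x < 0).
Proof. by rewrite -rc0 rc_lt. Qed.

Lemma sg_keep (a t : R) : 0 <= t <= 1 ->
  Num.sg ((1 - t) * a + t * Num.sg a) = Num.sg a.
Proof.
move=> /andP[t0 t1].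
case: (ltgtP a 0) => ha.
- rewrite (ltr0_sg ha) ltr0_sg //; nra.
- rewrite (gtr0_sg ha) gtr0_sg //; nra.
- by rewrite ha sgr0 !mulr0 addr0 sgr0.
Qed.

Lemma bools (a b : R) : Num.sg b = Num.sg a ->
  [/\ (rc b == 0) = (rc a == 0), (0 < rc b) = (0 < rc a) & (rc b < 0) = (rc a < 0)].
Proof.
move=> e; rewrite !rc_eq0 !rc_gt0 !rc_lt0.
by rewrite -!(sgr_cp0 b) e !sgr_cp0.
Qed.

Lemma stage1 (U : 'M[C]_k) (v : 'rV[C]_k) : adjm U *m U = 1%:M -> goodv v ->
  exists s : 'rV[C]_k, exists p : R -> 'M[C]_k,
  [/\ p 0 = adjm U *m diag_mx v *m U, p 1 = adjm U *m diag_mx s *m U, lipm p,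
    (forall t, 0 <= t <= 1 -> Good (p t)) &
    goodv s /\ forall i, s 0 i \in [:: 0; 1; -1]].
Proof.
move=> hU [hv [c0 cp cm]].
pose al i := complex.Re (v 0 i).
have vE i : v 0 i = rc (al i).
  by rewrite /al RRe_real //; apply/CrealP; exact: hv.
pose wv t : 'rV[C]_k := \row_i rc ((1 - t) * al i + t * Num.sg (al i)).
have gw t : 0 <= t <= 1 -> goodv (wv t).
  move=> t01; split; first by move=> i; rewrite mxE conjc_real.
  have hb i := bools (sg_keep (al i) t01).
  rewrite /vseq !count_map in c0 cp cm *.
  split.
  - rewrite -c0; apply: eq_count => i /=; rewrite mxE vE; by case: (hb i).
  - rewrite -cp; apply: eq_count => i /=; rewrite mxE vE; by case: (hb i).
  - rewrite -cm; apply: eq_count => i /=; rewrite mxE vE; by case: (hb i).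
exists (wv 1), (fun t => adjm U *m diag_mx (wv t) *m U); split => //.
- congr (_ *m diag_mx _ *m _); apply/rowP => i; rewrite mxE vE.
  by congr (rc _); rewrite subr0 mul1r mul0r addr0.
- apply: lipm_mul; last exact: lipm_cst.
  apply: lipm_mul; first exact: lipm_cst.
  apply: lipm_diag => i.
  apply: (lip_ext (f := fun t => rc (al i) + rc t * rc (Num.sg (al i) - al i))).
    by move=> t; rewrite mxE -rmorphM -rmorphD; congr (rc _); ring.
  apply: lip_add; first exact: lip_cst.
  apply: lip_mul; [exact: lip_id | exact: lip_cst].
- by move=> t t01; exists U, (wv t); split => //; apply: gw.
- split; first by apply: gw; rewrite ler01 lexx.
  move=> i; rewrite mxE subrr mul0r add0r mul1r !inE.
  case: (ltgtP (al i) 0) => ha.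
  + by rewrite (ltr0_sg ha) rmorphN (rmorph1 (real_complex R)) eqxx !orbT.
  + by rewrite (gtr0_sg ha) (rmorph1 (real_complex R)) eqxx orbT.
  + by rewrite ha sgr0 rc0 eqxx.
Qed.

End Stage.

Section Perm.
Variable R : realType.
Local Notation C := (R[i]).
Local Notation rc := (real_complex R).
Variable k : nat.
Variables n0 np nm : nat.
Local Notation Good := (Good n0 np nm).
Local Notation goodv := (goodv n0 np nm).

Definition Eseq : seq C := nseq n0 0 ++ nseq np 1 ++ nseq nm (-1).
Definition ecan : 'rV[C]_k := \row_i Eseq`_i.

Lemma one_m1 : ((1 : C) == -1) = false.
Proof. by apply/negP => /eqP h; have := ltr01 (R := C); rewrite h oppr_gt0 ltr10. Qed.

Lemma count3 (X : seq C) (p : pred C) : all (mem [:: 0; 1; -1]) X ->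
  count p X = (p 0%R * count (pred1 0%R) X + p 1%R * count (pred1 1%R) X
               + p (-1)%R * count (pred1 (-1)%R) X)%N.
Proof.
elim: X => [|x X IH] /=; first by rewrite !muln0.
move=> /andP[hx /IH ->]; move: hx; rewrite !inE => /or3P[] /eqP ->.
- rewrite eqxx eq_sym oner_eq0 eq_sym oppr_eq0 oner_eq0 /=; case: (p 0) (p 1) (p (-1)) => [] [] [] /=; lia.
- rewrite eqxx oner_eq0 one_m1 /=; case: (p 0) (p 1) (p (-1)) => [] [] [] /=; lia.
- rewrite eqxx oppr_eq0 oner_eq0 eq_sym one_m1 /=; case: (p 0) (p 1) (p (-1)) => [] [] [] /=; lia.
Qed.

Lemma count_E (p : pred C) :
  count p Eseq = (p 0%R * n0 + p 1%R * np + p (-1)%R * nm)%N.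
Proof. rewrite /Eseq !count_cat !count_nseq; case: (p 0) (p 1) (p (-1)) => [] [] [] /=; lia. Qed.

Lemma perm_can (s : 'rV[C]_k) : goodv s -> (forall i, s 0 i \in [:: 0; 1; -1]) ->
  goodv ecan /\ exists P : 'M[C]_k, adjm P *m P = 1%:M /\
    diag_mx s = adjm P *m diag_mx ecan *m P.
Proof.
move=> [hs [c0 cp cm]] h3.
have hall : all (mem [:: 0; 1; -1]) (vseq s).
  by apply/allP => x /mapP [i _ ->]; exact: h3.
have c1 : count (pred1 1) (vseq s) = np.
  rewrite -cp; apply: eq_in_count => x /mapP [i _ ->] /=.
  move: (h3 i); rewrite !inE => /or3P[] /eqP ->.
  - by rewrite eq_sym oner_eq0 ltxx.
  - by rewrite eqxx ltr01.
  - by rewrite eq_sym one_m1 oppr_gt0 ltr10.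
have cm1 : count (pred1 (-1)) (vseq s) = nm.
  rewrite -cm; apply: eq_in_count => x /mapP [i _ ->] /=.
  move: (h3 i); rewrite !inE => /or3P[] /eqP ->.
  - by rewrite eq_sym oppr_eq0 oner_eq0 ltxx.
  - by rewrite one_m1 ltr10.
  - by rewrite eqxx ltrN10.
have hperm : perm_eq Eseq (vseq s).
  apply/seq.permP => p; rewrite count_E count3 // c1 cm1.
  by rewrite (_ : count (pred1 0) (vseq s) = n0).
pose t := [tuple s 0 i | i < k].
have vt : vseq s = t by rewrite /t /=.
have sz : size Eseq = k by rewrite (perm_size hperm) size_map size_enum_ord.
move: (hperm); rewrite vt => /tuple_permP [q hq].
have hE (i : 'I_k) : Eseq`_i = s 0 (q i).
  by rewrite hq -(tnth_nth 0) !tnth_mktuple.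
have ve : vseq ecan = Eseq.
  rewrite /vseq -[RHS](mkseq_nth 0) sz /mkseq -val_enum_ord -map_comp.
  by apply: eq_map => i /=; rewrite mxE.
split.
  split; first by move=> i; rewrite mxE hE hs.
  by rewrite ve !(seq.permP hperm).
have aP : adjm (perm_mx q : 'M[C]_k) = perm_mx q^-1.
  rewrite -tr_perm_mx /adjm; congr (_^T); apply/matrixP => i j.
  by rewrite !mxE conjc_nat.
exists (perm_mx q); split.
  by rewrite aP -perm_mxM mulVg perm_mx1.
rewrite aP -row_permE.
have -> : perm_mx q = perm_mx (q^-1)^-1 :> 'M[C]_k by rewrite invgK.
rewrite -col_permE.
apply/matrixP => a b; rewrite !mxE (inj_eq perm_inj) hE permKV.
done.
Qed.

End Perm.

Section Core.
Variable R : realType.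
Local Notation C := (R[i]).
Local Notation rc := (real_complex R).
Variable k : nat.
Variables n0 np nm : nat.
Local Notation Good := (Good n0 np nm).
Local Notation goodv := (goodv n0 np nm).

Definition mcat (f g : R -> 'M[C]_k) t := if t <= 2^-1 then f (2 * t) else g (2 * t - 1).

Lemma mcat0 f g : mcat f g 0 = f 0.
Proof. by rewrite /mcat mulr0; case: ifP => // h; exfalso; move: h => /negbT; rewrite -ltNge => h; lra. Qed.

Lemma mcat1 f g : mcat f g 1 = g 1.
Proof.
rewrite /mcat; case: ifP => h.
  by exfalso; have h' : (1 : R) <= 2^-1 := h; lra.
by congr g; ring.
Qed.

Lemma lipm_cat f g : lipm f -> lipm g -> f 1 = g 0 -> lipm (mcat f g).
Proof.
move=> hf hg e i j.
apply: (lip_ext (f := fun t => if t <= 2^-1 then f (2 * t) i j else g (2 * t - 1) i j)).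
  by move=> t; rewrite /mcat; case: ifP.
by apply: (lip_concat (f := fun t => f t i j) (g := fun t => g t i j)) => //; rewrite e.
Qed.

Lemma good_cat f g : (forall t, 0 <= t <= 1 -> Good (f t)) ->
  (forall t, 0 <= t <= 1 -> Good (g t)) ->
  forall t, 0 <= t <= 1 -> Good (mcat f g t).
Proof.
move=> hf hg t /andP[t0 t1]; rewrite /mcat; case: ifP => h.
  by apply: hf; apply/andP; split; lra.
apply: hg; move/negbT: h; rewrite -ltNge => h; apply/andP; split; lra.
Qed.

Lemma core (H0 H1 : 'M[C]_k) : Good H0 -> Good H1 ->
  exists p : R -> 'M[C]_k, [/\ p 0 = H0, p 1 = H1, lipm p &
    forall t, 0 <= t <= 1 -> Good (p t)].
Proof.
move=> [U0 [v0 [hU0 hv0 ->]]] [U1 [v1 [hU1 hv1 ->]]].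
have [s0 [q0 [q00 q01 lq0 gq0 [gs0 hs0]]]] := stage1 hU0 hv0.
have [s1 [q1 [q10 q11 lq1 gq1 [gs1 hs1]]]] := stage1 hU1 hv1.
have [ge [P0 [hP0 e0]]] := perm_can gs0 hs0.
have [_ [P1 [hP1 e1]]] := perm_can gs1 hs1.
pose V0 := P0 *m U0; pose V1 := P1 *m U1.
have hV0 : adjm V0 *m V0 = 1%:M.
  by rewrite /V0 adjmM -mulmxA (mulmxA (adjm P0)) hP0 mul1mx.
have hV1 : adjm V1 *m V1 = 1%:M.
  by rewrite /V1 adjmM -mulmxA (mulmxA (adjm P1)) hP1 mul1mx.
have [U [U0e U1e lU hU]] := unitary_path hV0 hV1.
pose q t := adjm (U t) *m diag_mx (@ecan R k n0 np nm) *m U t.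
have lq : lipm q.
  apply: lipm_mul; last exact: lU.
  apply: lipm_mul; last exact: lipm_cst.
  exact: lipm_adj.
have gq t : 0 <= t <= 1 -> Good (q t).
  by move=> _; exists (U t), (@ecan R k n0 np nm); split.
have eq0 : q0 1 = q 0.
  by rewrite q01 /q U0e /V0 e0 adjmM !mulmxA.
have eq1 : q 1 = q1 1.
  by rewrite q11 /q U1e /V1 e1 adjmM !mulmxA.
exists (mcat q0 (mcat q (fun t => q1 (1 - t)))); split.
- by rewrite mcat0.
- by rewrite !mcat1 subrr.
- apply: (lipm_cat lq0); last by rewrite mcat0.
  apply: (lipm_cat lq); last by rewrite subr0.
  by move=> i j; apply: (lip_rev (f := fun t => q1 t i j)); apply: lq1.
- apply: good_cat => //; apply: good_cat => // t /andP[t0 t1].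
  by apply: gq1; apply/andP; split; lra.
Qed.

End Core.

Section Main.
Variable R : realType.
Local Notation C := (R[i]).
Local Notation rc := (real_complex R).
Variable d : nat.
Local Notation n := (2 * d)%N.
Variable K : {set 'I_n}.
Variables n0 np nm : nat.

Lemma herm_entry (S : 'M[C]_n) : Defs.hermitian S -> forall l m, conjc (S m l) = S l m.
Proof. by move=> hS l m; rewrite -{2}hS !mxE. Qed.

Lemma subK_herm (S : 'M[C]_n) : Defs.hermitian S -> adjm (subK K S) = subK K S.
Proof. by move=> hS; apply/matrixP => i j; rewrite !mxE herm_entry. Qed.

Lemma main_path (Sx Sy : 'M[C]_n) (x0 : 'I_n) (x0K : x0 \in K) :
  Defs.hermitian Sx -> Defs.hermitian Sy ->
  inertia (subK K Sx) n0 np nm -> inertia (subK K Sy) n0 np nm ->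
  exists Sp : R -> 'M[C]_n, [/\ Sp 0 = Sx, Sp 1 = Sy, lipm Sp &
    forall t, 0 <= t <= 1 -> Defs.hermitian (Sp t) /\ inertia (subK K (Sp t)) n0 np nm].
Proof.
move=> hx hy ix iy.
have gx := herm_good (subK_herm hx) ix.
have gy := herm_good (subK_herm hy) iy.
have [H [H0 H1 lH gH]] := core gx gy.
pose r := enum_rank_in x0K.
pose Sp t : 'M[C]_n := \matrix_(l, m) (if (l \in K) && (m \in K) then H t (r l) (r m)
   else rc (1 - t) * Sx l m + rc t * Sy l m).
have subE t : subK K (Sp t) = H t.
  apply/matrixP => i j; rewrite !mxE !enum_valP /= /r !enum_valK_in //.
exists Sp; split.
- apply/matrixP => l m; rewrite mxE; case: ifP => [/andP[lK mK]|_].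
    by rewrite H0 mxE /r !enum_rankK_in.
  by rewrite subr0 (rmorph1 (real_complex R)) (rmorph0 (real_complex R)) mul1r mul0r addr0.
- apply/matrixP => l m; rewrite mxE; case: ifP => [/andP[lK mK]|_].
    by rewrite H1 mxE /r !enum_rankK_in.
  by rewrite subrr (rmorph1 (real_complex R)) (rmorph0 (real_complex R)) mul1r mul0r add0r.
- move=> l m; case h: ((l \in K) && (m \in K)).
    apply: (lip_ext (f := fun t => H t (r l) (r m))); first by move=> t; rewrite mxE h.
    exact: lH.
  apply: (lip_ext (f := fun t => rc (1 - t) * Sx l m + rc t * Sy l m)).
    by move=> t; rewrite mxE h.
  apply: (lip_ext (f := fun t => Sx l m + rc t * (Sy l m - Sx l m))).
    by move=> t; rewrite rmorphB (rmorph1 (real_complex R)); ring.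
  apply: lip_add; first exact: lip_cst.
  apply: lip_mul; [exact: lip_id | exact: lip_cst].
- move=> t t01; rewrite subE; split; last exact: good_inertia (gH t t01).
  have hH := good_herm (gH t t01).
  apply/matrixP => l m; rewrite !mxE andbC; case: ifP => [/andP[lK mK]|_].
    by rewrite -{2}hH !mxE.
  by rewrite cjD !cjM !conjc_real !herm_entry.
Qed.

End Main.

Theorem lemma7p3 (R : realType) (d : nat) (K : {set 'I_(2 * d)})
    (n0 np : nat) :
  (2 <= d)%N -> K != set0 ->
  (n0 <= #|K|)%N -> (np <= #|K| - n0)%N ->
  path_connected (@inJ R d K n0 np (#|K| - n0 - np)%N).
Proof.
move=> _ /set0Pn [x0 x0K] _ _ x y [_ [Sx [[hx ex] ix]]] [_ [Sy [[hy ey] iy]]].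
have [Sp [S0 S1 lS gS]] := main_path x0K hx hy ix iy.
pose g t := (AK K (Sp t), BK K (Sp t)).
exists g; split; [|split; [|split]].
- apply: quot_path_lip.
  + by move=> t t01; apply: inM_NF; case: (gS t t01).
  + move=> l i /=; case: (boolP (i \in K)) => iK.
      by apply: (lip_ext (f := fun _ => - (l == i)%:R)) => [t|]; [rewrite mxE iK | exact: lip_cst].
    by apply: (lip_ext (f := fun t => Sp t l i)) => [t|]; [rewrite mxE (negPf iK) | exact: lS].
  + move=> l i /=; case: (boolP (i \in K)) => iK.
      by apply: (lip_ext (f := fun t => Sp t l i)) => [t|]; [rewrite mxE iK | exact: lS].
    by apply: (lip_ext (f := fun _ => (l == i)%:R)) => [t|]; [rewrite mxE (negPf iK) | exact: lip_cst].
- move=> t t01; have [hS iS] := gS t t01; split; first exact: inM_NF.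
  exists (Sp t); split; last exact: iS.
  by split => //; rewrite /g; apply: equiv_refl.
- by apply: equiv_sym; rewrite /g S0.
- by apply: equiv_sym; rewrite /g S1.
Qed.
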